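(* Let $P$ be a Horn labelled program that is consistent (i.e. has at least one classical model). Then $P$ has a unique justified model, and it coincides with the least classical model of $P$.
   Context: Fix a finite non-empty set $\mathit{At}$ of propositional atoms. A labelled rule $r$ has the form $\ell : p_1 \vee \dots \vee p_m \leftarrow q_1 \wedge \dots \wedge q_n \wedge \neg s_1 \wedge \dots \wedge \neg s_j \wedge \neg\neg t_1 \wedge \dots \wedge \neg\neg t_k$ with $m,n,j,k \ge 0$ and atoms in $\mathit{At}$; $\mathit{Lb}(r)=\ell$, $\mathit{Hd}(r)=p_1\vee\dots\vee p_m$, $H(r)=\{p_1,\dots,p_m\}$, $\mathit{Bd}(r)$ is the whole antecedent, $\mathit{Bd}^+(r)=q_1\wedge\dots\wedge q_n$, $B^+(r)=\{q_1,\dots,q_n\}$, $\mathit{Bd}^-(r)=\neg s_1 \wedge \dots \wedge \neg s_j \wedge \neg\neg t_1 \wedge \dots \wedge \neg\neg t_k$. Empty disjunction is $\bot$, empty conjunction $\top$. A labelled program $P$ is a finite set of labelled rules with no repeated label; $\mathit{Lb}(P)$ is its set of labels. $P$ is Horn if $\mathit{Bd}^-(r)=\top$ and $|H(r)|\le 1$ for all $r\in P$ (so constraints $\bot\leftarrow q_1\wedge\dots\wedge q_n$ are allowed). An interpretation $I\subseteq\mathit{At}$ is a (classical) model of $P$ if $I\models \mathit{Bd}(r)\to\mathit{Hd}(r)$ for every $r\in P$. $\mathit{Sup}(I,P,p)=\{ r \in P \mid p \in H(r),\ I \models \mathit{Bd}(r)\}$. A support graph of a model $I$ under $P$ is a directed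 graph $G=\langle I,E,\lambda\rangle$ with vertex set $I$, edges $E\subseteq I\times I$ and a labelling $\lambda: I\to \mathit{Lb}(P)$ such that (i) $\lambda$ is injective, and (ii) for every $p\in I$, the rule $r\in P$ with $\mathit{Lb}(r)=\lambda(p)$ satisfies $r\in \mathit{Sup}(I,P,p)$ and $B^+(r)=\{q \mid (q,p)\in E\}$. An explanation is an acyclic support graph. A classical model $I$ of $P$ is a justified model if some explanation of $I$ under $P$ exists. *)

(* Defs.v *)
From mathcomp Require Import all_boot.
From Stdlib Require List.
Set Implicit Arguments. Unset Strict Implicit. Unset Printing Implicit Defensive.

(* A labelled rule  l : p1 v .. v pm <- q1 /\ .. /\ qn /\ ~s1 /\ .. /\ ~sj /\ ~~t1 /\ .. /\ ~~tk *)
Record rule (At : finType) (L : Type) := Rule {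
  lab  : L;
  hd   : seq At;
  pos  : seq At;
  neg  : seq At;
  nneg : seq At
}.

Definition labelled_program (At : finType) (L : eqType) (P : seq (rule At L)) : Prop :=
  uniq (map (@lab At L) P).

Definition horn (At : finType) (L : Type) (P : seq (rule At L)) : Prop :=
  forall r, List.In r P -> neg r = [::] /\ nneg r = [::] /\ size (hd r) <= 1.

(* I |= Bd(r)  (classically, I |= ~~t iff t \in I) *)
Definition body_sat (At : finType) (L : Type) (I : {set At}) (r : rule At L) : bool :=
  all (fun q => q \in I) (pos r) && all (fun s => s \notin I) (neg r)
  && all (fun t => ~~ ~~ (t \in I)) (nneg r).

Definition head_sat (At : finType) (L : Type) (I : {set At}) (r : rule At L) : bool :=
  has (fun p => p \in I) (hd r).

Definition is_model (At : finType) (L : Type) (P : seq (rule At L)) (I : {set At}) : Prop :=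
  forall r, List.In r P -> body_sat I r -> head_sat I r.

Definition consistent (At : finType) (L : Type) (P : seq (rule At L)) : Prop :=
  exists I, is_model P I.

Definition least_model (At : finType) (L : Type) (P : seq (rule At L)) (I : {set At}) : Prop :=
  is_model P I /\ forall J, is_model P J -> I \subset J.

Definition in_Sup (At : finType) (L : Type) (I : {set At}) (P : seq (rule At L)) (p : At)
  (r : rule At L) : Prop :=
  List.In r P /\ p \in hd r /\ body_sat I r.

(* Support graph <I, E, lambda> of I under P.  E : rel At restricted to I x I;
   the labelling lambda : I -> Lb(P) is encoded as a partial map At -> option L
   defined (Some) exactly on I. *)
Definition support_graph (At : finType) (L : Type) (P : seq (rule At L)) (I : {set At})
  (E : rel At) (lambda : At -> option L) : Prop :=
  (forall p q, E p q -> p \in I /\ q \in I) /\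
  (forall p, p \notin I -> lambda p = None) /\
  (forall p q, p \in I -> q \in I -> lambda p = lambda q -> p = q) /\
  (forall p, p \in I -> exists r, lambda p = Some (lab r) /\ in_Sup I P p r /\
       forall q, (q \in pos r) = E q p).

Definition acyclic (At : finType) (E : rel At) : Prop :=
  forall p q, E p q -> ~~ connect E q p.

Definition explanation (At : finType) (L : Type) (P : seq (rule At L)) (I : {set At})
  (E : rel At) (lambda : At -> option L) : Prop :=
  support_graph P I E lambda /\ acyclic E.

Definition justified_model (At : finType) (L : Type) (P : seq (rule At L)) (I : {set At}) : Prop :=
  is_model P I /\ exists E lambda, explanation P I E lambda.

(* Main.v *)
Require Import Defs.
From mathcomp Require Import all_boot.
From Stdlib Require List.

Set Implicit Arguments. Unset Strict Implicit. Unset Printing Implicit Defensive.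

Lemma hasIn (T : Type) (a : pred T) (s : seq T) :
  has a s <-> exists x, List.In x s /\ a x.
Proof.
elim: s => [|x s IH] /=; first by split=> // [[? []]].
split.
- case/orP=> [ax|/IH [y [Hy ay]]]; first by exists x; auto.
  by exists y; auto.
- move=> [y [[<-|Hy] ay]]; first by rewrite ay.
  by apply/orP; right; apply/IH; exists y.
Qed.

Definition TP (At : finType) (L : Type) (P : seq (rule At L)) (X : {set At}) : {set At} :=
  [set p | has (fun r => (p \in hd r) && all (fun q => q \in X) (pos r)) P].

Lemma TP_mono (At : finType) (L : Type) (P : seq (rule At L)) :
  {homo TP P : X Y / X \subset Y}.
Proof.
move=> X Y /subsetP XY; apply/subsetP => p; rewrite !inE => /hasIn [r [Hr /andP [ph pa]]].
apply/hasIn; exists r; split => //; rewrite ph /=.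
by apply/allP => q /(allP pa) /XY.
Qed.

Lemma horn_hd (At : finType) (L : Type) (P : seq (rule At L)) r p :
  horn P -> List.In r P -> p \in hd r -> hd r = [:: p].
Proof.
move=> H Hr; have [_ [_]] := H r Hr.
case: (hd r) => [|a [|b s]] //=; by rewrite inE => _ /eqP ->.
Qed.

Lemma horn_body (At : finType) (L : Type) (P : seq (rule At L)) r (I : {set At}) :
  horn P -> List.In r P -> body_sat I r = all (fun q => q \in I) (pos r).
Proof.
move=> H Hr; have [Hn [Hnn _]] := H r Hr.
by rewrite /body_sat Hn Hnn /= !andbT.
Qed.

Lemma TP_sub_model (At : finType) (L : Type) (P : seq (rule At L)) (M X : {set At}) :
  horn P -> is_model P M -> X \subset M -> TP P X \subset M.
Proof.
move=> H HM /subsetP XM; apply/subsetP => p; rewrite inE => /hasIn [r [Hr /andP [ph pa]]].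
have : head_sat M r.
  apply: HM => //; rewrite (horn_body _ H Hr); apply/allP => q /(allP pa) /XM //.
by rewrite /head_sat (horn_hd H Hr ph) /= orbF.
Qed.

Lemma iter_sub_model (At : finType) (L : Type) (P : seq (rule At L)) (M : {set At}) n :
  horn P -> is_model P M -> iter n (TP P) set0 \subset M.
Proof.
move=> H HM; elim: n => [|n IH] /=; first exact: sub0set.
exact: TP_sub_model.
Qed.

Lemma fix_model (At : finType) (L : Type) (P : seq (rule At L)) :
  horn P -> consistent P -> is_model P (fixset (TP P)).
Proof.
move=> H [M HM] r Hr.
rewrite (horn_body _ H Hr) => /allP pa.
have [_ [_]] := H r Hr.
case Ehd: (hd r) => [|a [|b s]] //= _.
- have := HM r Hr.
  rewrite (horn_body _ H Hr) /head_sat Ehd /= => K; apply: K.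
  apply/allP => q /pa; apply/subsetP; exact: iter_sub_model.
- rewrite /head_sat Ehd /= orbF -(fixsetK (@TP_mono _ _ P)) inE; apply/hasIn; exists r; split => //.
  by rewrite Ehd inE eqxx /=; apply/allP.
Qed.

Lemma filter_cons_In (T : Type) (a : pred T) (s : seq T) r t :
  filter a s = r :: t -> List.In r s /\ a r.
Proof.
elim: s => [|x s IH] //=; case ax: (a x).
  by case=> <- _; auto.
by move/IH => [? ?]; auto.
Qed.

Lemma has_filter_cons (T : Type) (a : pred T) (s : seq T) :
  has a s -> exists r t, filter a s = r :: t.
Proof.
elim: s => [|x s IH] //=; case ax: (a x) => /=; first by eauto.
exact: IH.
Qed.

Lemma In_map_mem (T : Type) (L : eqType) (f : T -> L) s y :
  List.In y s -> f y \in map f s.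
Proof.
elim: s => [|x s IH] //= [<-|/IH]; rewrite inE; first by rewrite eqxx.
by move=> ->; rewrite orbT.
Qed.

Lemma uniq_map_inj (T : Type) (L : eqType) (f : T -> L) s x y :
  uniq (map f s) -> List.In x s -> List.In y s -> f x = f y -> x = y.
Proof.
elim: s => [|a s IH] //= /andP [na us] [<-|Hx] [<-|Hy] //.
- by move=> E; move: na; rewrite E (In_map_mem f Hy).
- by move=> E; move: na; rewrite -E (In_map_mem f Hx).
- exact: IH.
Qed.

Lemma just_sub (At : finType) (L : Type) (P : seq (rule At L)) (J : {set At}) E lam :
  horn P -> explanation P J E lam -> J \subset fixset (TP P).
Proof.
move=> H [[_ [_ [_ Hsup]]] Hac].
suff K : forall n p, #|[set q | connect E q p]| <= n -> p \in J -> p \in fixset (TP P).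
  by apply/subsetP => p; apply: (K _ p (leqnn _)).
elim=> [|n IH] p Hc pJ.
  have : 0 < #|[set q | connect E q p]| by apply/card_gt0P; exists p; rewrite inE connect0.
  by rewrite lt0n -leqn0 Hc.
have [r [_ [[Hr [ph Hb]] Epos]]] := Hsup p pJ.
rewrite -(fixsetK (@TP_mono _ _ P)) inE; apply/hasIn; exists r; split => //.
rewrite ph /=; apply/allP => q qr.
have Eqp : E q p by rewrite -Epos.
have qJ : q \in J by move: Hb; rewrite (horn_body _ H Hr) => /allP; apply.
apply: IH qJ; rewrite -ltnS; apply: leq_trans Hc; apply: proper_card.
apply/properP; split.
  apply/subsetP => x; rewrite !inE => Hx; apply: connect_trans Hx _; exact: connect1.
exists p; rewrite !inE ?connect0 //; exact: Hac.
Qed.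

Lemma path_rank (At : finType) (E : rel At) (rk : At -> nat) :
  (forall p q, E p q -> rk p < rk q) -> forall x y, connect E x y -> rk x <= rk y.
Proof.
move=> Hr x y /connectP [s Hp ->]; elim: s x Hp => [|z s IH] x //= /andP [exz Hp].
apply: leq_trans (IH _ Hp); exact: ltnW (Hr _ _ exz).
Qed.

Lemma fix_justified (At : finType) (L : eqType) (P : seq (rule At L)) :
  labelled_program P -> horn P -> consistent P ->
  exists E lam, explanation P (fixset (TP P)) E lam.
Proof.
move=> Hlab H Hcons.
have Fm := @TP_mono _ _ P.
set I := fixset (TP P).
pose rk := fix_order (TP P).
pose cand p := [seq r <- P | (p \in hd r) &&
                 all (fun q => q \in iter (rk p).-1 (TP P) set0) (pos r)].
pose lam p := if p \in I then (if cand p is r :: _ then Some (lab r) else None) else None.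
pose E := fun q p => (p \in I) && (if cand p is r :: _ then q \in pos r else false).
have candok : forall p, p \in I -> exists r t, cand p = r :: t.
  move=> p pI; apply: has_filter_cons.
  have : p \in iter (rk p) (TP P) set0 by rewrite in_iter_fix_orderE.
  have : 0 < rk p by rewrite fix_order_gt0.
  rewrite /=; case: (rk p) => [|k] //= _; rewrite inE //.
have candP : forall p r t, cand p = r :: t -> List.In r P /\ p \in hd r /\
    {subset pos r <= iter (rk p).-1 (TP P) set0}.
  move=> p r t Ec; have [Hr /andP [ph pa]] := filter_cons_In Ec; split=> //; split=> //.
  by move=> q /(allP pa).
have rkpos : forall p q, E q p -> rk q < rk p.
  move=> p q; rewrite /E; case pI: (p \in I) => //=.
  have [r [t Ec]] := candok p pI; rewrite Ec => qr.
  have [_ [_ /(_ q qr) qit]] := candP _ _ _ Ec.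
  have := fix_order_small Fm qit.
  have : 0 < rk p by rewrite fix_order_gt0.
  by case: (rk p).
have iterI : forall k q, q \in iter k (TP P) set0 -> q \in I.
  by move=> k q; apply/subsetP; apply: iter_sub_fix.
exists E, lam; split; last first.
  move=> p q Epq; apply/negP => /(path_rank (fun a b h => rkpos b a h)) Hc.
  by have := rkpos _ _ Epq; rewrite ltnNge Hc.
split.
  move=> q p; rewrite /E; case pI: (p \in I) => //=.
  have [r [t Ec]] := candok p pI; rewrite Ec => qr; split => //.
  have [_ [_ /(_ q qr) qit]] := candP _ _ _ Ec; exact: iterI qit.
split.
  by move=> p /negPf pI; rewrite /lam pI.
split.
  move=> p q pI qI; rewrite /lam pI qI.
  have [r [t Ec]] := candok p pI; have [r' [t' Ec']] := candok q qI.
  rewrite Ec Ec' => -[El].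
  have [Hr [ph _]] := candP _ _ _ Ec; have [Hr' [qh _]] := candP _ _ _ Ec'.
  have Err := uniq_map_inj Hlab Hr Hr' El.
  have := horn_hd H Hr ph; rewrite Err (horn_hd H Hr' qh); by case.
move=> p pI.
have [r [t Ec]] := candok p pI.
have [Hr [ph Hsub]] := candP _ _ _ Ec.
exists r; split; first by rewrite /lam pI Ec.
split; last by move=> q; rewrite /E pI Ec.
split=> //; split=> //.
rewrite (horn_body _ H Hr); apply/allP => q /Hsub; exact: iterI.
Qed.

Theorem proposition4 (At : finType) (L : eqType) (P : seq (rule At L)) :
  0 < #|At| ->
  labelled_program P -> horn P -> consistent P ->
  exists I : {set At}, least_model P I /\
    (forall J : {set At}, justified_model P J <-> J = I).
Proof.
move=> _ Hlab H Hcons.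
have Hm := fix_model H Hcons.
have Hleast : forall J, is_model P J -> fixset (TP P) \subset J.
  by move=> J HJ; apply: iter_sub_model.
exists (fixset (TP P)); split; first by split.
move=> J; split.
  move=> [HJ [E [lam Hex]]]; apply/eqP; rewrite eqEsubset (just_sub H Hex).
  exact: Hleast.
move=> ->; split => //; exact: fix_justified.
Qed.
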